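(* Let $G$ be a graph of order $n$ with at least one edge. Then $\gamma^{DLD}(G)=n-1$ if and only if $G$ is a threshold graph.
   Context: All graphs are finite, simple and undirected (not necessarily connected). For $u\in V$, $N(u)$ is the set of neighbours of $u$ and $N[u]=N(u)\cup\{u\}$. A code is a non-empty subset $C\subseteq V$; $I(C;u)=N[u]\cap C$. A code $C$ is solid-locating-dominating if $I(C;u)\ne\emptyset$ for every $u\in V\setminus C$ and $I(C;u)\not\subseteq I(C;v)$ for all distinct $u,v\in V\setminus C$; $\gamma^{DLD}(G)$ is the minimum size of such a code. A threshold graph is a graph that can be built from the empty graph by repeatedly adding either an isolated vertex or a vertex adjacent to all existing vertices; equivalently, a graph in which for every two vertices $x,y$ we have $N(x)\subseteq N[y]$ or $N(y)\subseteq N[x]$. *)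

(* Defs.v *)
From mathcomp Require Import all_boot.
Set Implicit Arguments. Unset Strict Implicit. Unset Printing Implicit Defensive.

Definition simple_graph (T : finType) (e : rel T) : Prop :=
  symmetric e /\ irreflexive e.

Definition nbhd (T : finType) (e : rel T) (u : T) : {set T} := [set v | e u v].
Definition cnbhd (T : finType) (e : rel T) (u : T) : {set T} := u |: nbhd e u.

Definition Icode (T : finType) (e : rel T) (C : {set T}) (u : T) : {set T} :=
  cnbhd e u :&: C.

Definition is_DLD (T : finType) (e : rel T) (C : {set T}) : bool :=
  [&& C != set0,
      [forall u, (u \notin C) ==> (Icode e C u != set0)] &
      [forall u, forall v,
         [&& u \notin C, v \notin C & u != v] ==> ~~ (Icode e C u \subset Icode e C v)]].

(* gamma^{DLD}(G): minimum size of a DLD code.  The whole vertex set is a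
   DLD code whenever T is nonempty, so the default #|T| is never strictly
   below the true minimum. *)
Definition gammaDLD (T : finType) (e : rel T) : nat :=
  \big[minn/#|T|]_(C : {set T} | is_DLD e C) #|C|.

(* threshold graphs, by the iterative construction: an ordering of all
   vertices (a duplicate-free list s) such that each vertex is either
   isolated from or adjacent to all vertices occurring before it. *)
Fixpoint threshold_seq (T : finType) (e : rel T) (s : seq T) : bool :=
  match s with
  | [::] => true
  | x :: s' => threshold_seq e s' &&
               (all (fun y => ~~ e x y) s' || all (fun y => e x y) s')
  end.

Definition is_threshold (T : finType) (e : rel T) : Prop :=
  exists s : seq T, [/\ uniq s, (forall x, x \in s) & threshold_seq e s].

(* Main.v *)
Require Import Defs.
From mathcomp Require Import all_boot.
From mathcomp Require Import zify.
Set Implicit Arguments. Unset Strict Implicit. Unset Printing Implicit Defensive.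

Section Aux.
Variables (T : finType) (e : rel T).
Hypothesis sym : symmetric e.
Hypothesis irr : irreflexive e.

Lemma inN u v : (v \in nbhd e u) = e u v.
Proof. by rewrite /nbhd inE. Qed.

Lemma inCN u v : (v \in cnbhd e u) = (v == u) || e u v.
Proof. by rewrite /cnbhd !inE. Qed.

Definition Pb := [forall u, forall v,
  (nbhd e u \subset cnbhd e v) || (nbhd e v \subset cnbhd e u)].

Lemma big_min_le (P : pred {set T}) (F : {set T} -> nat) x0 j :
  P j -> \big[minn/x0]_(i | P i) F i <= F j.
Proof.
move=> Pj; have: j \in index_enum {set T} by rewrite mem_index_enum.
elim: (index_enum _) => [|a r IH] //=; rewrite big_cons inE.
case/orP => [/eqP <-|jr]; first by rewrite Pj geq_minl.
case: (P a) => //; [rewrite geq_min IH ?orbT //|exact: IH].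
Qed.

Lemma gamma_le u w : e u w -> gammaDLD e <= #|T| - 1.
Proof.
move=> euw.
have wu : w != u by apply/eqP => wu; rewrite wu irr in euw.
have H : is_DLD e [set~ u].
  apply/and3P; split.
  - by apply/set0Pn; exists w; rewrite !inE.
  - apply/forallP => x; apply/implyP; rewrite !inE negbK => /eqP ->.
    by apply/set0Pn; exists w; rewrite /Icode inE inCN euw orbT !inE.
  - apply/forallP => x; apply/forallP => y; apply/implyP.
    by rewrite !inE !negbK => /and3P [/eqP -> /eqP -> /eqP].
rewrite /gammaDLD; apply: leq_trans (big_min_le (fun C : {set T} => #|C|) #|T| H) _.
by rewrite cardsC1; lia.
Qed.

Lemma gamma_ge m : (forall C, is_DLD e C -> m <= #|C|) -> m <= #|T| -> m <= gammaDLD e.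
Proof.
move=> H HT; rewrite /gammaDLD; apply: (big_ind (fun x => m <= x)) => //.
- by move=> a b ha hb; rewrite leq_min ha hb.

Qed.

Lemma P_ge C : Pb -> is_DLD e C -> #|T| - 1 <= #|C|.
Proof.
move=> /forallP P /and3P [_ _ /forallP H].
rewrite leqNgt; apply/negP => lt.
have : 1 < #|~: C| by have := cardsC C; lia.
case/card_gt1P => u [v [uC vC uv]]; rewrite !inE in uC vC.
have Hp : forall a b, a \notin C -> b \notin C -> a != b -> ~~ (nbhd e a \subset cnbhd e b).
  move=> a b aC bC ab.
  have := forallP (H a) b; rewrite aC bC ab /= => /subsetPn [x].
  rewrite /Icode inE => /andP [xa xC]; rewrite inE xC andbT => /negP xb.
  apply/subsetPn; exists x.
    rewrite inN; move: xa; rewrite inCN => /orP [/eqP xa|//].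
    by rewrite -xa xC in aC.
  by apply/negP => xv; apply: xb.
have := forallP (P u) v; rewrite (negbTE (Hp _ _ uC vC uv)).
by rewrite eq_sym in uv; rewrite (negbTE (Hp _ _ vC uC uv)).
Qed.


Lemma notP_lt : ~~ Pb -> 2 <= #|T| /\ gammaDLD e <= #|T| - 2.
Proof.
rewrite negb_forall => /existsP [u]; rewrite negb_forall => /existsP [v].
rewrite negb_or => /andP [/subsetPn [x xu xv] /subsetPn [y yv yu]].
rewrite inN in xu; rewrite inN in yv.
have uv : u != v.
  by apply/eqP => uv; rewrite uv inCN yv orbT in yu.
have xnv : x != v by apply/eqP => xe; rewrite xe inCN eqxx in xv.
have xnu : x != u by apply/eqP => xe; rewrite xe irr in xu.
have ynu : y != u by apply/eqP => xe; rewrite xe inCN eqxx in yu.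
have ynv : y != v by apply/eqP => xe; rewrite xe irr in yv.
set C := ~: [set u; v].
have xC : x \in C by rewrite !inE negb_or xnu xnv.
have yC : y \in C by rewrite !inE negb_or ynu ynv.
have IxU : x \in Icode e C u by rewrite /Icode inE xC andbT inCN xu orbT.
have IyV : y \in Icode e C v by rewrite /Icode inE yC andbT inCN yv orbT.
have IxV : x \notin Icode e C v by rewrite /Icode inE xC andbT.
have IyU : y \notin Icode e C u by rewrite /Icode inE yC andbT.
have H : is_DLD e C.
  apply/and3P; split.
  - by apply/set0Pn; exists x.
  - apply/forallP => z; apply/implyP; rewrite !inE negbK => /orP [] /eqP ->.
    + by apply/set0Pn; exists x.
    + by apply/set0Pn; exists y.
  - apply/forallP => a; apply/forallP => b; apply/implyP.
    rewrite !inE !negbK => /and3P [/orP [] /eqP -> /orP [] /eqP -> ab].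
    + by rewrite eqxx in ab.
    + by apply/subsetPn; exists x.
    + by apply/subsetPn; exists y.
    + by rewrite eqxx in ab.
have c2 : #|[set u; v]| = 2 by rewrite cards2 uv.
have cC := cardsC [set u; v]; rewrite -/C c2 in cC.
split; first by move: cC; clear; lia.
rewrite /gammaDLD; apply: leq_trans (big_min_le (fun C : {set T} => #|C|) #|T| H) _.
by move: cC; clear; lia.
Qed.

Lemma thr_seq_P (s : seq T) : threshold_seq e s -> forall x y, x \in s -> y \in s ->
  (forall z, z \in s -> e x z -> (z == y) || e y z) \/
  (forall z, z \in s -> e y z -> (z == x) || e x z).
Proof.
elim: s => [|a s IH] //= /andP [ts hA].
have K : forall y, y \in a :: s ->
  (forall z, z \in a :: s -> e a z -> (z == y) || e y z) \/
  (forall z, z \in a :: s -> e y z -> (z == a) || e a z).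
  move=> y; rewrite inE => /orP [/eqP ->|ys].
    by left => z _ ->; rewrite orbT.
  case/orP: hA => /allP hA.
  - left => z; rewrite inE => /orP [/eqP ->|zs]; first by rewrite irr.
    by have := hA z zs => /negbTE ->.
  - right => z; rewrite inE => /orP [/eqP ->|zs]; first by rewrite eqxx.
    by rewrite hA // orbT.
move=> x y; rewrite [x \in _]inE => /orP [/eqP ->|xs]; first exact: K.
have xas : x \in a :: s by rewrite inE xs orbT.
rewrite [y \in _]inE => /orP [/eqP ->|ys]; first by case: (K x xas) => H; [right|left].
have Ea : e a x = e a y.
  by case/orP: hA => /allP hA; [rewrite (negbTE (hA x xs)) (negbTE (hA y ys))|rewrite !hA].
case: (IH ts x y xs ys) => H; [left|right] => z; rewrite inE => /orP [/eqP ->|zs] //;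
  try exact: H.
- by rewrite sym Ea sym => ->; rewrite orbT.
- by rewrite sym -Ea sym => ->; rewrite orbT.
Qed.

Lemma thr_P : is_threshold e -> Pb.
Proof.
case=> s [_ alls ts]; apply/forallP => u; apply/forallP => v.
case: (thr_seq_P ts (alls u) (alls v)) => H; apply/orP; [left|right];
  apply/subsetP => z; rewrite inN inCN; exact: H.
Qed.


Lemma Pl : Pb -> forall u v, (forall z, e u z -> (z == v) || e v z) \/
                             (forall z, e v z -> (z == u) || e u z).
Proof.
move=> /forallP P u v; have := forallP (P u) v.
by case/orP => /subsetP H; [left|right] => z ez; rewrite -inCN; apply: H; rewrite inN.
Qed.

Lemma extreme (S : {set T}) x0 : Pb -> x0 \in S ->
  exists2 a, a \in S & (forall y, y \in S -> ~~ e a y) \/ (forall y, y \in S -> y != a -> e a y).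
Proof.
move=> P x0S.
pose NS i := [set z in S | e i z].
case: (arg_minnP (fun i => #|NS i|) x0S) => y yS ymin.
case: (set_0Vmem (NS y)) => [N0|[w]].
  exists y => //; left => z zS; apply/negP => eyz.
  have : z \in NS y by rewrite inE zS eyz.
  by rewrite N0 inE.
rewrite inE => /andP [wS eyw].
exists w => //; right => v vS vw.
rewrite sym.
case: (Pl P y v) => H.
  by case/orP: (H w eyw) => // /eqP wv; rewrite wv eqxx in vw.
case: (eqVneq v y) => [->//|vy].
pose A := NS v :\ y; pose B := NS y :\ v.
have AB : A \subset B.
  apply/subsetP => z; rewrite !inE => /and3P [zy zS evz].
  have zv : z != v by apply/eqP => zv; rewrite zv irr in evz.
  by case/orP: (H z evz) => [zy'|->]; [rewrite zy' in zy|rewrite zv zS].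
have cAB : #|B| <= #|A|.
  have h1 := cardsD1 y (NS v); have h2 := cardsD1 v (NS y).
  have E : (y \in NS v) = (v \in NS y) 
    by have yS' : y \in S := yS; rewrite /NS !inE yS' vS /= sym.
  have := ymin v vS; rewrite -/(NS y) -/(NS v) h1 h2 -/A -/B E.
  by move: (v \in NS y) => b; case: b => /=; lia.
have /eqP eAB : A == B by rewrite eqEcard AB cAB.
have : w \in B by rewrite !inE wS eyw !andbT; apply/eqP => wv; rewrite wv eqxx in vw.
by rewrite -eAB !inE => /and3P [].
Qed.

Lemma P_thr : Pb -> is_threshold e.
Proof.
move=> P.
suff H : forall n (S : {set T}), #|S| = n -> exists s : seq T,
   [/\ uniq s, (forall x, (x \in s) = (x \in S)) & threshold_seq e s].
  case: (H _ [set: T] erefl) => s [us ms ts]; exists s; split => // x.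
  by rewrite ms inE.
elim=> [|n IH] S cS.
  exists [::]; split => // x; apply/esym; apply/negP => xS.
  by have := card0_eq cS x; rewrite inE xS.
have : 0 < #|S| by rewrite cS.
case/card_gt0P => x0 x0S.
case: (extreme P x0S) => a aS Ha.
have cS' : #|S :\ a| = n by have := cardsD1 a S; rewrite aS cS; lia.
case: (IH _ cS') => s [us ms ts].
exists (a :: s); split.
- by rewrite /= us andbT ms !inE eqxx.
- by move=> x; rewrite inE ms !inE; case: eqVneq => [->|]; rewrite ?aS.
- rewrite /= ts /=; case: Ha => Ha; apply/orP; [left|right]; apply/allP => y;
    rewrite ms !inE => /andP [ya yS].
  + exact: Ha.
  + exact: Ha.
Qed.

End Aux.

Theorem mainTheorem7 (T : finType) (e : rel T) :
  simple_graph e ->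
  (exists u v : T, e u v) ->
  gammaDLD e = #|T| - 1 <-> is_threshold e.
Proof.
move=> [sym irr] [u [w euw]].
have le := gamma_le irr euw.
split.
- move=> Hg; apply: (P_thr sym irr).
  case: (boolP (Pb e)) => // nP.
  have [h1 h2] := notP_lt irr nP.
  move: Hg h1 h2; clear; lia.
- move=> /(thr_P sym irr) P; apply/eqP; rewrite eqn_leq le /=.
  apply: gamma_ge; first by move=> C; apply: P_ge.
  exact: leq_subr.
Qed.
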